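(* For every step $h\in[H]$, every state $s\in\mathcal S$ and every $\boldsymbol\theta,\boldsymbol\theta'\in\mathbb R^d$, \[ |V^\star_h(\boldsymbol\theta,s)-V^\star_h(\boldsymbol\theta',s)|\le\sqrt d\,(H-h+1)\,\|\boldsymbol\theta-\boldsymbol\theta'\|_2 . \]
   Context: Episodic two-player zero-sum vector-valued Markov game: finite state space $\mathcal S$, finite action sets $\mathcal A,\mathcal B$, horizon $H$, transition kernels $P_h(\cdot\mid s,a,b)$, return functions $\mathbf r_h:\mathcal S\times\mathcal A\times\mathcal B\to[0,1]^d$. For $\boldsymbol\theta\in\mathbb R^d$ and policies $\mu$ (min-player) and $\nu$ (max-player), $V^{\mu,\nu}_h(\boldsymbol\theta,s)=\mathbb E_{\mu,\nu}[\sum_{l=h}^H\boldsymbol\theta\cdot\mathbf r_l(s_l,a_l,b_l)\mid s_h=s]$, and $V^\star_h(\boldsymbol\theta,s)=\min_\mu\max_\nu V^{\mu,\nu}_h(\boldsymbol\theta,s)$ is the minimax (Nash equilibrium) value of the scalarized game with reward $\boldsymbol\theta\cdot\mathbf r_h$. *)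

(* Defs.v *)
From HB Require Import structures.
From mathcomp Require Import all_boot all_order all_algebra.
From mathcomp Require Import classical_sets reals.
Set Implicit Arguments. Unset Strict Implicit. Unset Printing Implicit Defensive.
Import Order.TTheory GRing.Theory Num.Theory.
Local Open Scope ring_scope.
Local Open Scope classical_set_scope.

Section MarkovGame.
Variable R : realType.

Definition is_dist (T : finType) (p : {ffun T -> R}) : Prop :=
  (forall x, 0 <= p x) /\ \sum_(x : T) p x = 1.

Definition is_policy (S T : finType) (pi : nat -> S -> {ffun T -> R}) : Prop :=
  forall h s, is_dist (pi h s).

Variables (S A B : finType) (d H : nat).
Variable P : nat -> S -> A -> B -> {ffun S -> R}.
Variable r : nat -> S -> A -> B -> 'I_d -> R.

Definition scal_rew (theta : 'I_d -> R) (h : nat) (s : S) (a : A) (b : B) : R :=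
  \sum_(i < d) theta i * r h s a b i.

(* Value with n remaining steps, i.e. at step h = H - n + 1 (steps are
   1..H); Vrem 0 = 0 is V_{H+1} = 0.  This is the expectation
   E_{mu,nu}[ sum_{l=h}^H theta . r_l(s_l,a_l,b_l) | s_h = s ] computed
   stepwise. *)
Fixpoint Vrem (mu : nat -> S -> {ffun A -> R}) (nu : nat -> S -> {ffun B -> R})
  (theta : 'I_d -> R) (n : nat) (s : S) : R :=
  match n with
  | 0 => 0
  | n'.+1 =>
      let h := (H - n')%N in
      \sum_(a : A) \sum_(b : B) mu h s a * nu h s b *
        (scal_rew theta h s a b + \sum_(s' : S) P h s a b s' * Vrem mu nu theta n' s')
  end.

Definition Vpol mu nu (h : nat) (theta : 'I_d -> R) (s : S) : R :=
  Vrem mu nu theta (H.+1 - h) s.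

Definition Vstar (h : nat) (theta : 'I_d -> R) (s : S) : R :=
  inf [set x : R | exists mu, is_policy mu /\
        x = sup [set y : R | exists nu, is_policy nu /\ y = Vpol mu nu h theta s]].

End MarkovGame.

Definition norm2 (R : realType) (d : nat) (v : 'I_d -> R) : R :=
  Num.sqrt (\sum_(i < d) v i ^+ 2).

(* Main.v *)
Require Import Defs.
From HB Require Import structures.
From mathcomp Require Import all_boot all_order all_algebra.
From mathcomp Require Import classical_sets reals.
From mathcomp Require Import boolp zify ring lra.
Import Order.TTheory GRing.Theory Num.Theory.
Local Open Scope ring_scope.
Local Open Scope classical_set_scope.

Section Aux.
Variable R : realType.

Lemma cs d (a : 'I_d -> R) : (\sum_i a i)^+2 <= d%:R * \sum_i a i ^+2.
Proof.
have H0 : 0 <= \sum_i \sum_j (a i - a j)^+2.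
  by apply: sumr_ge0 => i _; apply: sumr_ge0 => j _; exact: sqr_ge0.
have E : \sum_i \sum_j (a i - a j)^+2 =
    (d%:R * \sum_i a i ^+2 - (\sum_i a i)^+2) *+ 2.
  under eq_bigr => i _ do (under eq_bigr => j _ do rewrite sqrrB;
     rewrite big_split /= sumrB sumr_const card_ord sumrMnl -mulr_sumr).
  rewrite big_split /= sumrB sumr_const card_ord !sumrMnl -mulr_suml.
  set S2 := \sum_i a i ^+ 2; set S1 := \sum_i a i.
  by rewrite -(mulr_natl S2) !mulr2n; ring.
move: H0; rewrite E -mulr_natl.
rewrite pmulr_rge0 ?ltr0n // subr_ge0 //.
Qed.

Lemma sum_abs_le d (v : 'I_d -> R) :
  \sum_i `|v i| <= Num.sqrt (d%:R) * norm2 v.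
Proof.
rewrite /norm2 -sqrtrM ?ler0n //.
rewrite -[X in X <= _](@ger0_norm _ (\sum_i `|v i|)); last first.
  by apply: sumr_ge0 => i _.
rewrite -sqrtr_sqr; apply: ler_wsqrtr.
have E : \sum_i `|v i| ^+ 2 = \sum_i v i ^+ 2.
  by apply: eq_bigr => i _; rewrite real_normK ?num_real.
rewrite -E; exact: (@cs d (fun i => `|v i|)).
Qed.

Lemma dist_avg (T : finType) (p : {ffun T -> R}) (f : T -> R) (c : R) :
  is_dist p -> (forall x, `|f x| <= c) -> `|\sum_x p x * f x| <= c.
Proof.
case=> p0 p1 hf.
apply: le_trans; first exact: ler_norm_sum.
apply: le_trans (_ : \sum_x p x * c <= c).
  apply: ler_sum => x _; rewrite normrM ger0_norm //; exact: ler_wpM2l.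
by rewrite -mulr_suml p1 mul1r.
Qed.

Lemma sup_bound (T : Type) (X : T -> Prop) (u : T -> R) (M : R) :
  (forall x, X x -> `|u x| <= M) -> 0 <= M ->
  `|sup [set y | exists x, X x /\ y = u x]| <= M.
Proof.
move=> hu M0.
have [[x0 Xx0]|nX] := pselect (exists x, X x); last first.
  have -> : [set y | exists x, X x /\ y = u x] = set0.
    by apply/seteqP; split => y // [x [Xx _]]; exfalso; apply: nX; exists x.
  by rewrite sup0 normr0.
have ub : has_ubound [set y | exists x, X x /\ y = u x].
  exists M => y [x [Xx ->]]; exact: le_trans (ler_norm _) (hu _ Xx).
have ne : [set y | exists x, X x /\ y = u x] !=set0 by exists (u x0), x0.
have h1 : sup [set y | exists x, X x /\ y = u x] <= M.
  apply: ge_sup => // y [x [Xx ->]]; exact: le_trans (ler_norm _) (hu _ Xx).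
have h2 : u x0 <= sup [set y | exists x, X x /\ y = u x].
  by apply: ub_le_sup => //; exists x0.
have := hu _ Xx0; rewrite !ler_norml => /andP[h3 h4].
apply/andP; split; lra.
Qed.

Lemma sup_close (T : Type) (X : T -> Prop) (u v : T -> R) (C M : R) :
  (forall x, X x -> `|u x - v x| <= C) -> (forall x, X x -> `|u x| <= M) ->
  (forall x, X x -> `|v x| <= M) -> 0 <= C ->
  `|sup [set y | exists x, X x /\ y = u x] - sup [set y | exists x, X x /\ y = v x]| <= C.
Proof.
move=> huv hu hv C0.
have [[x0 Xx0]|nX] := pselect (exists x, X x); last first.
  have E : forall w : T -> R, [set y | exists x, X x /\ y = w x] = set0.
    by move=> w; apply/seteqP; split => y // [x [Xx _]]; exfalso; apply: nX; exists x.
  by rewrite !E sup0 subrr normr0.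
have ubU : has_ubound [set y | exists x, X x /\ y = u x].
  exists M => y [x [Xx ->]]; exact: le_trans (ler_norm _) (hu _ Xx).
have ubV : has_ubound [set y | exists x, X x /\ y = v x].
  exists M => y [x [Xx ->]]; exact: le_trans (ler_norm _) (hv _ Xx).
have h1 : sup [set y | exists x, X x /\ y = u x] <= sup [set y | exists x, X x /\ y = v x] + C.
  apply: ge_sup; first by exists (u x0), x0.
  move=> y [x [Xx ->]].
  have : v x <= sup [set y | exists x, X x /\ y = v x] by apply: ub_le_sup => //; exists x.
  have := huv _ Xx; rewrite ler_norml => /andP[? ?]; lra.
have h2 : sup [set y | exists x, X x /\ y = v x] <= sup [set y | exists x, X x /\ y = u x] + C.
  apply: ge_sup; first by exists (v x0), x0.
  move=> y [x [Xx ->]].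
  have : u x <= sup [set y | exists x, X x /\ y = u x] by apply: ub_le_sup => //; exists x.
  have := huv _ Xx; rewrite ler_norml => /andP[? ?]; lra.
rewrite ler_norml; apply/andP; split; lra.
Qed.

Lemma inf_close (T : Type) (X : T -> Prop) (u v : T -> R) (C M : R) :
  (forall x, X x -> `|u x - v x| <= C) -> (forall x, X x -> `|u x| <= M) ->
  (forall x, X x -> `|v x| <= M) -> 0 <= C ->
  `|inf [set y | exists x, X x /\ y = u x] - inf [set y | exists x, X x /\ y = v x]| <= C.
Proof.
move=> huv hu hv C0.
have E : forall w : T -> R, -%R @` [set y | exists x, X x /\ y = w x] =
    [set y | exists x, X x /\ y = - w x].
  move=> w; apply/seteqP; split => y.
    by move=> [_ [x [Xx ->]] <-]; exists x.
  by move=> [x [Xx ->]]; exists (w x) => //; exists x.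
rewrite /inf !E -opprD normrN.
refine (@sup_close T X (fun x => - u x) (fun x => - v x) C M _ _ _ C0) => x Xx.
- by rewrite -opprD normrN; exact: huv.
- by rewrite normrN; exact: hu.
- by rewrite normrN; exact: hv.
Qed.

End Aux.

Section Main.
Variables (R : realType) (S A B : finType) (d H : nat)
  (P : nat -> S -> A -> B -> {ffun S -> R})
  (r : nat -> S -> A -> B -> 'I_d -> R).

Lemma Vrem_lin (mu : nat -> S -> {ffun A -> R}) (nu : nat -> S -> {ffun B -> R}) (theta theta' : 'I_d -> R) n s :
  Vrem H P r mu nu theta n s - Vrem H P r mu nu theta' n s =
  Vrem H P r mu nu (fun i => theta i - theta' i) n s.
Proof.
elim: n s => [|n IH] s /=; first by rewrite subrr.
rewrite -sumrB; apply: eq_bigr => a _.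
rewrite -sumrB; apply: eq_bigr => b _.
rewrite -mulrBr; congr (_ * _).
rewrite opprD addrACA; congr (_ + _).
  by rewrite /scal_rew -sumrB; apply: eq_bigr => i _; rewrite mulrBl.
by rewrite -sumrB; apply: eq_bigr => s' _; rewrite -mulrBr IH.
Qed.

Lemma Vrem_bound (mu : nat -> S -> {ffun A -> R}) (nu : nat -> S -> {ffun B -> R}) (theta : 'I_d -> R) (L : R) :
  is_policy mu -> is_policy nu ->
  (forall h s a b, is_dist (P h s a b)) ->
  (forall h s a b, `|scal_rew r theta h s a b| <= L) -> 0 <= L ->
  forall n s, `|Vrem H P r mu nu theta n s| <= n%:R * L.
Proof.
move=> hmu hnu hP hL L0; elim=> [|n IH] s /=; first by rewrite normr0 mul0r.
under eq_bigr => a _ do (under eq_bigr => b _ do rewrite -mulrA; rewrite -mulr_sumr).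
apply: dist_avg => // a; apply: dist_avg => // b.
apply: le_trans; first exact: ler_normD.
rewrite -nat1r mulrDl mul1r; apply: lerD => //.
exact: dist_avg.
Qed.

Lemma scal_bound (theta : 'I_d -> R) :
  (forall h s a b i, 0 <= r h s a b i <= 1) ->
  forall h s a b, `|scal_rew r theta h s a b| <= \sum_i `|theta i|.
Proof.
move=> hr h s a b; apply: le_trans; first exact: ler_norm_sum.
apply: ler_sum => i _; rewrite normrM.
have /andP[r0 r1] := hr h s a b i.
rewrite (ger0_norm r0); exact: ler_piMr.
Qed.

End Main.

Theorem lemma7 (R : realType) (S A B : finType) (d H : nat)
  (P : nat -> S -> A -> B -> {ffun S -> R})
  (r : nat -> S -> A -> B -> 'I_d -> R)
  (hP : forall h s a b, is_dist (P h s a b))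
  (hr : forall h s a b i, 0 <= r h s a b i <= 1)
  (h : nat) (hh : (1 <= h <= H)%N) (s : S) (theta theta' : 'I_d -> R) :
  `| Vstar H P r h theta s - Vstar H P r h theta' s |
    <= Num.sqrt (d%:R) * (H - h + 1)%:R * norm2 (fun i => theta i - theta' i).
Proof.
have En : (H.+1 - h = H - h + 1)%N by lia.
set n := (H - h + 1)%N.
set C := Num.sqrt (d%:R) * n%:R * norm2 (fun i => theta i - theta' i).
set M := n%:R * (\sum_i `|theta i| + \sum_i `|theta' i|).
have C0 : 0 <= C by rewrite /C /norm2 !mulr_ge0 ?sqrtr_ge0.
have S0 : forall th : 'I_d -> R, 0 <= \sum_i `|th i| by move=> th; apply: sumr_ge0.
have M0 : 0 <= M by rewrite /M mulr_ge0 ?addr_ge0.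
have bnd : forall th mu nu, is_policy mu -> is_policy nu ->
    `|Vpol H P r mu nu h th s| <= n%:R * \sum_i `|th i|.
  move=> th mu nu hmu hnu; rewrite /Vpol En.
  by apply: Vrem_bound => //; apply: scal_bound.
have bndM : forall mu nu, is_policy mu -> is_policy nu ->
    `|Vpol H P r mu nu h theta s| <= M /\ `|Vpol H P r mu nu h theta' s| <= M.
  move=> mu nu hmu hnu; split.
    apply: le_trans (bnd _ _ _ hmu hnu) _; rewrite /M ler_wpM2l // lerDl //.
  apply: le_trans (bnd _ _ _ hmu hnu) _; rewrite /M ler_wpM2l // lerDr //.
rewrite /Vstar.
apply: (@inf_close R _ (@is_policy R S A) _ _ C M) => // mu hmu.
- apply: (@sup_close R _ (@is_policy R S B) _ _ C M) => // [nu hnu||].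
  + rewrite /Vpol Vrem_lin En.
    apply: le_trans; first by apply: Vrem_bound => //; apply: scal_bound.
    rewrite /C -/n [_ * n%:R]mulrC -mulrA ler_wpM2l //; exact: sum_abs_le.
  + by move=> nu hnu; case: (bndM mu nu hmu hnu).
  + by move=> nu hnu; case: (bndM mu nu hmu hnu).
- by apply: sup_bound => // nu hnu; case: (bndM mu nu hmu hnu).
- by apply: sup_bound => // nu hnu; case: (bndM mu nu hmu hnu).
Qed.
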